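(* For each integer $l \ge 2$ let $f_l(z) = \sum_{n\ge1}\gamma_l(n)q^n$ be a weight-$l$ CM newform (in $S_l(\Gamma_0(32))$ if $l$ is even, in $S_l(\Gamma_0(4),(\frac{-4}{\cdot}))$ if $l \equiv 1 \pmod 4$, in $S_l(\Gamma_0(16),(\frac{-4}{\cdot}))$ if $l \equiv 3 \pmod 4$) whose coefficients at odd primes $p$ are $$\gamma_l(p) = \begin{cases} (-1)^{\frac{(x+y-1)(l-1)}{2}}\left[(x+iy)^{l-1} + (x-iy)^{l-1}\right], & p \equiv 1 \pmod 4,\ p = x^2+y^2,\ x \text{ odd},\\ 0, & p \equiv 3 \pmod 4.\end{cases}$$ Let $k \ge 2$ be an integer. Then for every odd prime $p$ and every integer $m \geq 1$, $$\gamma_k(p)^m = \sum_{t=0}^{\lfloor \frac{m-1}{2}\rfloor}\binom{m}{t} p^{t(k-1)}\gamma_{(m-2t)(k-1)+1}(p) + \begin{cases}\binom{m}{m/2} p^{\frac m2 (k-1)}, & p \equiv 1 \pmod 4 \text{ and } m \text{ even},\\ 0, & \text{otherwise}.\end{cases}$$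
   Context: $q = e^{2\pi i z}$; $(\frac{-4}{\cdot})$ is the nontrivial Dirichlet character modulo $4$. A CM newform is a newform $\sum\gamma(n)q^n$ with $\gamma(p) = \psi(p)\gamma(p)$ for all primes $p$ in a set of density one, for some nontrivial real Dirichlet character $\psi$. (Such newforms $f_l$ exist for every $l \ge 2$.) *)

(* Defs.v *)
From HB Require Import structures.
From mathcomp Require Import all_boot all_order all_algebra all_field.
Set Implicit Arguments. Unset Strict Implicit. Unset Printing Implicit Defensive.
Import Order.TTheory GRing.Theory Num.Theory.
Local Open Scope ring_scope.

Definition cm_coef (l : nat) (x y : int) : algC :=
  (-1) ^ (((x + y - 1) %/ 2)%Z * (l.-1)%:Z) *
  (((x%:~R + 'i * y%:~R) ^+ l.-1) + ((x%:~R - 'i * y%:~R) ^+ l.-1)).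

(* Main.v *)
Require Import Defs.
From HB Require Import structures.
From mathcomp Require Import all_boot all_order all_algebra all_field.
From mathcomp Require Import zify ring lra.
Import Order.TTheory GRing.Theory Num.Theory.
Local Open Scope ring_scope.

Lemma sqrtm1 p : prime p -> (p %% 4 = 1)%N -> exists i : 'F_p, i ^+ 2 = -1.
Proof.
move=> pp p4.
have [q hq] : exists q, p = (q * 4 + 1)%N by exists (p %/ 4)%N; rewrite {1}(divn_eq p 4) p4.
have p1 := prime_gt1 pp.
have q1 : (0 < q)%N by move: p1; rewrite hq; case: q {hq}.
have [x [x0 xn]] : exists x : 'F_p, x != 0 /\ x ^+ (q * 2) != 1.
  case: (boolP [exists x : 'F_p, (x != 0) && (x ^+ (q * 2) != 1)]).
    by move/existsP=> [x /andP[??]]; exists x.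
  move/existsPn=> H; exfalso.
  have := @max_unity_roots _ (q * 2) (enum [pred x : 'F_p | x != 0]).
  rewrite enum_uniq => /(_ _ _ isT); rewrite muln_gt0 q1 => /(_ isT).
  have -> : all (q * 2).-unity_root (enum [pred x : 'F_p | x != 0]).
    apply/allP=> x; rewrite mem_enum inE unity_rootE => x0.
    by have := H x; rewrite x0 /= negbK.
  move=> /(_ isT); rewrite -cardE.
  have -> : #|[pred x : 'F_p | x != 0]| = #|predC1 (0 : 'F_p)| by apply: eq_card.
  rewrite cardC1 card_Fp // hq; lia.
have xp : x ^+ (q * 4) = 1.
  apply: (mulIf x0); rewrite mul1r -exprSr -addn1 -hq.
  by have := expf_card x; rewrite card_Fp.
exists (x ^+ q); rewrite -exprM.
have : (x ^+ (q * 2) - 1) * (x ^+ (q * 2) + 1) = 0.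
  rewrite mulrDr mulr1 mulrBl -exprD mul1r.
  have -> : (q * 2 + q * 2 = q * 4)%N by lia.
  by rewrite xp; ring.
move/eqP; rewrite mulf_eq0 subr_eq0 (negbTE xn) /= addr_eq0 => /eqP.
by rewrite mulnC.
Qed.
Lemma isqrt_ex n : exists s, (s * s <= n < s.+1 * s.+1)%N.
Proof.
elim: n => [|n [s hs]]; first by exists 0%N.
case: (ltnP n.+1 (s.+1 * s.+1)) => h; first by exists s; lia.
exists s.+1; lia.
Qed.

Lemma dist_sq (R : comRingType) (u v : nat) :
  ((maxn u v - minn u v)%N%:R : R) ^+ 2 = (u%:R - v%:R) ^+ 2.
Proof.
case: (leqP u v) => h.
  rewrite natrB //; ring.
rewrite natrB //; exact: ltnW.
Qed.

Lemma two_sq p : prime p -> (p %% 4 = 1)%N -> exists a b : nat, p = (a ^ 2 + b ^ 2)%N.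
Proof.
move=> pp p4; have [i hi] := sqrtm1 p pp p4.
have p1 := prime_gt1 pp.
have [s /andP[hs1 hs2]] := isqrt_ex p.
have hs1' : (s * s < p)%N.
  rewrite ltn_neqAle hs1 andbT; apply/eqP=> ep.
  have : (s %| p)%N by rewrite -ep dvdn_mulr.
  move: (pp); case/primeP => _ /[apply] /orP[] /eqP es; [lia|]. rewrite es in ep; nia.
pose f (uv : 'I_s.+1 * 'I_s.+1) : 'F_p := (uv.1 : nat)%:R - i * (uv.2 : nat)%:R.
case: (boolP [exists a, exists b, (a != b) && (f a == f b)]); last first.
  move/existsPn=> H; exfalso.
  have inj : injective f.
    move=> a b fab; apply/eqP; apply/negPn/negP=> nab.
    by move: (H a) => /existsPn /(_ b); rewrite nab fab eqxx.
  have := leq_card _ inj; rewrite card_Fp // card_prod !card_ord; lia.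
move=> /existsP[[u1 v1] /existsP[[u2 v2] /andP[nab /eqP fab]]].
exists (maxn u1 u2 - minn u1 u2)%N, (maxn v1 v2 - minn v1 v2)%N.
set N := ((maxn u1 u2 - minn u1 u2) ^ 2 + (maxn v1 v2 - minn v1 v2) ^ 2)%N.
have dN : (p %| N)%N.
  rewrite (dvdn_pcharf (pchar_Fp pp)) /N natrD !natrX !dist_sq.
  have -> : (u1 : nat)%:R - (u2 : nat)%:R = i * ((v1 : nat)%:R - (v2 : nat)%:R) :> 'F_p.
    by move: fab; rewrite /f /= => /eqP; rewrite subr_eq => /eqP ->; ring.
  by rewrite exprMn hi; apply/eqP; ring.
have Npos : (0 < N)%N.
  have : (u1 != u2) || (v1 != v2).
    by move: nab; rewrite xpair_eqE negb_and.
  case/orP=> /eqP ne.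
    have : (nat_of_ord u1 != u2) by apply/eqP=> e; apply: ne; exact: val_inj.
    rewrite /N; lia.
  have : (nat_of_ord v1 != v2) by apply/eqP=> e; apply: ne; exact: val_inj.
  rewrite /N; lia.
have Nlt : (N < 2 * p)%N.
  have := ltn_ord u1; have := ltn_ord u2; have := ltn_ord v1; have := ltn_ord v2.
  rewrite /N; nia.
move/dvdnP: dN => [k hk].
have : k = 1%N by nia.
by move=> k1; rewrite -/N hk k1 mul1n.
Qed.
Lemma sum_rev_tail (R : comRingType) (F : nat -> R) k n : (k <= n)%N ->
  \sum_(n - k <= i < n) F i = \sum_(0 <= t < k) F (n.-1 - t)%N.
Proof.
elim: k => [|k IH] hk; first by rewrite subn0 !big_geq.
rewrite big_nat_recr //= -IH; last by lia.
rewrite big_ltn; last by lia.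
have e1 : ((n - k.+1).+1 = n - k)%N by lia.
have e2 : (n.-1 - k = n - k.+1)%N by lia.
by rewrite e1 e2 addrC.
Qed.

Lemma binom_pair (R : comRingType) (A B : R) m : (1 <= m)%N ->
  (A + B) ^+ m =
  \sum_(0 <= t < ((m.-1)./2).+1)
     'C(m, t)%:R * (A * B) ^+ t * (A ^+ (m - 2 * t) + B ^+ (m - 2 * t))
  + (if ~~ odd m then 'C(m, m./2)%:R * (A * B) ^+ (m./2) else 0).
Proof.
move=> hm.
set h := ((m.-1)./2).+1.
have hh : (h + h <= m.+1)%N by rewrite /h; case/boolP: (odd m) => om; lia.
rewrite exprDn -(big_mkord xpredT (fun i => A ^+ (m - i) * B ^+ i *+ 'C(m, i))).
rewrite (@big_cat_nat _ _ _ h 0 m.+1) //=; last by lia.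
rewrite (@big_cat_nat _ _ _ (m.+1 - h) h m.+1) //=; [|lia|lia].
rewrite sum_rev_tail; last by lia.
rewrite [X in _ + X]addrC addrA -big_split /=.
apply: f_equal2.
  apply: eq_big_nat => t /andP[_ ht] /=.
  have ht2 : (2 * t < m)%N by rewrite /h in ht; lia.
  rewrite bin_sub; last by lia.
  have -> : (m - t = t + (m - 2 * t))%N by lia.
  have -> : A ^+ (m - (t + (m - 2 * t))) = A ^+ t by congr (_ ^+ _); lia.
  rewrite -(mulr_natl (A ^+ _ * _)) -(mulr_natl (A ^+ t * _)) (exprD A t) (exprD B t) exprMn.
  move: (A ^+ t) (B ^+ t) (A ^+ (m - 2 * t)) (B ^+ (m - 2 * t)) ('C(m, t)%:R : R) => a b c d e.
  ring.
case/boolP: (odd m) => om /=.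
  by rewrite big_geq //; rewrite /h; lia.
have -> : (m.+1 - h = h.+1)%N by rewrite /h; lia.
rewrite big_nat1 -mulr_natl.
have -> : (h = m./2)%N by rewrite /h; lia.
have -> : (m - m./2 = m./2)%N by lia.
by rewrite exprMn mulrC.
Qed.

Lemma two_sq_int p : prime p -> (p %% 4 = 1)%N ->
  exists x y : int, p%:Z = x ^+ 2 + y ^+ 2 /\ ~~ (2 %| x)%Z.
Proof.
move=> pp p4; have [a [b hab]] := two_sq p pp p4.
have op : odd p by rewrite (divn_eq p 4) p4 oddD oddM andbF.
have eq : forall u v : nat, (u ^ 2 + v ^ 2)%N%:Z = u%:Z ^+ 2 + v%:Z ^+ 2.
  by move=> u v; rewrite PoszD !expr2 -!PoszM !expnS expn0 !muln1.
case/boolP: (odd a) => oa.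
  exists a%:Z, b%:Z; split; first by rewrite hab eq.
  by rewrite /dvdz unfold_in /= dvdn2 negbK.
exists b%:Z, a%:Z; split; first by rewrite hab eq addrC.
move: op; rewrite hab oddD !oddX /= (negbTE oa) /= => ob.
by rewrite /dvdz unfold_in /= dvdn2 negbK.
Qed.

Theorem corollary4p2 (gamma : nat -> nat -> algC)
  (Hg1 : forall (l p : nat) (x y : int), (2 <= l)%N -> prime p -> (p %% 4 = 1)%N ->
           p%:Z = x ^+ 2 + y ^+ 2 -> ~~ (2 %| x)%Z -> gamma l p = cm_coef l x y)
  (Hg3 : forall (l p : nat), (2 <= l)%N -> prime p -> (p %% 4 = 3)%N -> gamma l p = 0)
  (k : nat) (hk : (2 <= k)%N) (p : nat) (hp : prime p) (hpodd : odd p)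
  (m : nat) (hm : (1 <= m)%N) :
  gamma k p ^+ m =
    \sum_(0 <= t < ((m.-1)./2).+1)
       'C(m, t)%:R * p%:R ^+ (t * k.-1) * gamma ((m - 2 * t) * k.-1 + 1)%N p
    + (if (p %% 4 == 1)%N && ~~ odd m
       then 'C(m, m./2)%:R * p%:R ^+ (m./2 * k.-1) else 0).
Proof.
have hl : forall t, (t < ((m.-1)./2).+1)%N -> (2 <= (m - 2 * t) * k.-1 + 1)%N.
  by move=> t ht; nia.
case: (boolP (p %% 4 == 1)%N) => p4.
  have [x [y [hxy hx]]] := two_sq_int p hp (eqP p4).
  set s : algC := (-1) ^ ((x + y - 1) %/ 2)%Z.
  set A := s * (x%:~R + 'i * y%:~R).
  set B := s * (x%:~R - 'i * y%:~R).
  set n := k.-1.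
  have key : forall l, (2 <= l)%N -> gamma l p = A ^+ l.-1 + B ^+ l.-1.
    move=> l hl2; rewrite (Hg1 l p x y) // ?(eqP p4) // /cm_coef -exprz_exp.
    by rewrite -/s /A /B !exprMn mulrDr.
  have ss : s * s = 1.
    by rewrite /s -expfzMl mulrNN mulr1 exp1rz.
  have AB : A * B = p%:R.
    rewrite /A /B mulrACA ss mul1r.
    have -> : (p%:R : algC) = (p%:Z)%:~R by [].
    rewrite hxy rmorphD /= !rmorphXn /=.
    have := sqrCi algC; move=> hi.
    set X := (x%:~R : algC); set Y := (y%:~R : algC).
    rewrite !expr2 in hi *.
    have -> : (X + 'i * Y) * (X - 'i * Y) = X * X - ('i * 'i) * (Y * Y) by ring.
    by rewrite hi; ring.
  rewrite key // (@eq_big_nat _ _ _ 0 ((m.-1)./2).+1 _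
     (fun t => 'C(m, t)%:R * (A ^+ n * B ^+ n) ^+ t * ((A ^+ n) ^+ (m - 2 * t) + (B ^+ n) ^+ (m - 2 * t)))); last first.
    move=> t /andP[_ ht]; rewrite key; last exact: hl.
    rewrite addn1 /= -!exprM -exprMn AB -exprM (mulnC n t) (mulnC n).
    by [].
  rewrite -/n binom_pair // andTb.
  case: (odd m) => //=.
  by rewrite -exprMn AB -exprM mulnC.
have p3 : (p %% 4 = 3)%N.
  move: hpodd p4; rewrite {1}(divn_eq p 4) oddD oddM andbF /=.
  have := ltn_mod p 4; case: (p %% 4)%N => [|[|[|[|]]]] //.
rewrite (Hg3 k p) // expr0n /= eqn0Ngt hm /= big1_seq ?add0r.
  by [].
move=> t /andP[_]; rewrite mem_index_iota => /andP[_ ht].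
by rewrite (Hg3 _ p) ?mulr0 //; exact: hl.
Qed.
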